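(* There exists a topological group $G$ which is a $k$-space and has countable $cs^{\ast}$-character, but is not sequential. (For instance, $G=F(\beta D)$ or $G=A(\beta D)$, where $\beta D$ is the Stone–Čech compactification of an infinite discrete space $D$.) *)

(* Defs.v *)
From Stdlib Require Import Arith.

Set Implicit Arguments.

Definition is_topology (X : Type) (op : (X -> Prop) -> Prop) : Prop :=
  op (fun _ => True) /\
  (forall F : (X -> Prop) -> Prop,
      (forall U, F U -> op U) -> op (fun x => exists U, F U /\ U x)) /\
  (forall U V, op U -> op V -> op (fun x => U x /\ V x)).

Definition is_closed (X : Type) (op : (X -> Prop) -> Prop) (A : X -> Prop) : Prop :=
  op (fun x => ~ A x).

Definition hausdorff (X : Type) (op : (X -> Prop) -> Prop) : Prop :=
  forall x y : X, x <> y ->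
    exists U V, op U /\ op V /\ U x /\ V y /\ (forall z, U z -> V z -> False).

(* Continuity of a binary map X * X -> Y, X*X carrying the product topology
   (basic open rectangles U x V). *)
Definition continuous2 (X Y : Type) (opX : (X -> Prop) -> Prop)
  (opY : (Y -> Prop) -> Prop) (f : X -> X -> Y) : Prop :=
  forall a b (W : Y -> Prop), opY W -> W (f a b) ->
    exists U V, opX U /\ opX V /\ U a /\ V b /\
      (forall x y, U x -> V y -> W (f x y)).

Definition continuous (X Y : Type) (opX : (X -> Prop) -> Prop)
  (opY : (Y -> Prop) -> Prop) (f : X -> Y) : Prop :=
  forall W, opY W -> opX (fun x => W (f x)).

Definition topological_group (G : Type) (op : (G -> Prop) -> Prop)
  (mul : G -> G -> G) (inv : G -> G) (e : G) : Prop :=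
  is_topology op /\ hausdorff op /\
  (forall x y z, mul x (mul y z) = mul (mul x y) z) /\
  (forall x, mul e x = x) /\ (forall x, mul x e = x) /\
  (forall x, mul (inv x) x = e) /\ (forall x, mul x (inv x) = e) /\
  continuous2 op op mul /\ continuous op op inv.

Definition compact_set (X : Type) (op : (X -> Prop) -> Prop) (K : X -> Prop) : Prop :=
  forall F : (X -> Prop) -> Prop,
    (forall U, F U -> op U) ->
    (forall x, K x -> exists U, F U /\ U x) ->
    exists l : list (X -> Prop),
      (forall U, List.In U l -> F U) /\
      (forall x, K x -> exists U, List.In U l /\ U x).

Definition k_space (X : Type) (op : (X -> Prop) -> Prop) : Prop :=
  forall A : X -> Prop,
    (forall K, compact_set op K ->
       exists C, is_closed op C /\ (forall x, K x -> (A x <-> C x))) ->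
    is_closed op A.

Definition converges (X : Type) (op : (X -> Prop) -> Prop) (s : nat -> X) (x : X) : Prop :=
  forall U, op U -> U x -> exists N, forall n, N <= n -> U (s n).

Definition seq_closed (X : Type) (op : (X -> Prop) -> Prop) (A : X -> Prop) : Prop :=
  forall (s : nat -> X) x, (forall n, A (s n)) -> converges op s x -> A x.

Definition sequential (X : Type) (op : (X -> Prop) -> Prop) : Prop :=
  forall A, seq_closed op A -> is_closed op A.

Definition cs_star_network_at (X : Type) (op : (X -> Prop) -> Prop)
  (Nf : (X -> Prop) -> Prop) (x : X) : Prop :=
  forall (s : nat -> X) (O : X -> Prop), converges op s x -> op O -> O x ->
    exists N, Nf N /\ N x /\ (forall y, N y -> O y) /\
      (forall m, exists n, m <= n /\ N (s n)).

(* Countable cs*-character: every point has a countable cs*-network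
   (countable families are enumerated by nat, repetitions allowed). *)
Definition countable_cs_star_character (X : Type) (op : (X -> Prop) -> Prop) : Prop :=
  forall x : X, exists f : nat -> (X -> Prop),
    cs_star_network_at op (fun N => exists i, N = f i) x.

(* Main.v *)
Require Import Defs.
From mathcomp Require all_boot classical_sets filter.
Module UFL.
Import all_boot classical_sets filter.
Lemma ufl (Fil : (nat -> Prop) -> Prop) :
  Fil (fun _ => True) ->
  (forall A B, Fil A -> Fil B -> Fil (fun n => A n /\ B n)) ->
  (forall A B : nat -> Prop, (forall n, A n -> B n) -> Fil A -> Fil B) ->
  ~ Fil (fun _ => False) ->
  exists q : (nat -> Prop) -> Prop, (forall A, Fil A -> q A) /\
    q (fun _ => True) /\ ~ q (fun _ => False) /\
    (forall A B : nat -> Prop, (forall n, A n -> B n) -> q A -> q B) /\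
    (forall A B, q A -> q B -> q (fun n => A n /\ B n)) /\
    (forall A, q A \/ q (fun n => ~ A n)).
Proof.
move=> HT HI HS H0.
have FF : ProperFilter Fil.
  split; first exact: H0.
  split; [exact: HT| move=> A B; exact: HI | move=> A B; exact: HS].
have [G [GU sFG]] := ultraFilterLemma FF.
exists G; split; first exact: sFG.
have GF : ProperFilter G by exact: ultra_proper.
split; first exact: filterT.
split; first exact: (filter_not_empty G).
split; first by move=> A B AB; apply: filterS.
split; first by move=> A B; apply: filterI.
move=> A; have := in_ultra_setVsetC A GU. by case=> h; [left|right].
Qed.
End UFL.

Require Import Defs.
From Stdlib Require Import Arith Lia List Bool Classical ClassicalEpsilon
  FunctionalExtensionality PropExtensionality ProofIrrelevance.
Import ListNotations.

Definition S := nat -> Prop.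
Definition U := S -> Prop.

Definition uf (p : U) : Prop :=
  p (fun _ => True) /\ ~ p (fun _ => False) /\
  (forall A B : S, (forall n, A n -> B n) -> p A -> p B) /\
  (forall A B, p A -> p B -> p (fun n => A n /\ B n)) /\
  (forall A, p A \/ p (fun n => ~ A n)).

Section UF.
Variable p : U.
Hypothesis Hp : uf p.
Lemma uf_T : p (fun _ => True). Proof. apply Hp. Qed.
Lemma uf_F : ~ p (fun _ => False). Proof. apply Hp. Qed.
Lemma uf_mono A B : (forall n, A n -> B n) -> p A -> p B. Proof. apply Hp. Qed.
Lemma uf_and A B : p A -> p B -> p (fun n => A n /\ B n). Proof. apply Hp. Qed.
Lemma uf_compl A : p A \/ p (fun n => ~ A n). Proof. apply Hp. Qed.
Lemma uf_notboth A : p A -> p (fun n => ~ A n) -> False.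
Proof. intros H1 H2. apply uf_F. eapply uf_mono; [|apply (uf_and _ _ H1 H2)].
  simpl. intros n [a b]; auto. Qed.
Lemma uf_neg A : ~ p A <-> p (fun n => ~ A n).
Proof. split. intros H. destruct (uf_compl A); tauto.
  intros H1 H2. eapply uf_notboth; eauto. Qed.
Lemma uf_or A B : p (fun n => A n \/ B n) -> p A \/ p B.
Proof. intros H. destruct (classic (p A)) as [|HA]; auto. destruct (classic (p B)) as [|HB]; auto.
  exfalso. apply uf_neg in HA. apply uf_neg in HB.
  apply (uf_notboth _ H). eapply uf_mono; [|apply (uf_and _ _ HA HB)].
  simpl. intros n [a b] [c|c]; auto. Qed.
Lemma uf_ext A B : (forall n, A n <-> B n) -> (p A <-> p B).
Proof. intros H; split; apply uf_mono; firstorder. Qed.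
End UF.

Lemma uf_exists (Fil : U) :
  Fil (fun _ => True) ->
  (forall A B, Fil A -> Fil B -> Fil (fun n => A n /\ B n)) ->
  (forall A B : S, (forall n, A n -> B n) -> Fil A -> Fil B) ->
  ~ Fil (fun _ => False) ->
  exists q, uf q /\ forall A, Fil A -> q A.
Proof. intros. destruct (UFL.ufl Fil) as [q Hq]; auto.
  exists q. unfold uf. tauto. Qed.

Lemma uf_principal (a : nat) : uf (fun A => A a).
Proof. unfold uf; repeat split; auto. intros A. destruct (classic (A a)); auto. Qed.

Lemma uf_eq (p q : U) : (forall A, p A <-> q A) -> p = q.
Proof. intros H. apply functional_extensionality; intros A. apply propositional_extensionality. auto. Qed.

Lemma uf_sep (p q : U) : uf p -> uf q -> p <> q -> exists A, p A /\ ~ q A.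
Proof. intros Hp Hq Hne. apply NNPP; intro Hc. apply Hne, uf_eq. intros A; split.
  - intros HA. apply NNPP. intro HB. apply Hc; eauto.
  - intros HA. apply NNPP; intro HB. apply Hc. exists (fun n => ~ A n). split.
    + apply (uf_neg p Hp). auto.
    + intro H. apply (uf_notboth q Hq A); auto.
Qed.

Definition dec (P : Prop) : bool := if excluded_middle_informative P then true else false.
Lemma dec_true P : dec P = true <-> P.
Proof. unfold dec; destruct excluded_middle_informative; split; auto; discriminate. Qed.
Lemma dec_false P : dec P = false <-> ~ P.
Proof. unfold dec; destruct excluded_middle_informative; split; intuition; discriminate. Qed.

Definition chi (p : U) (A : S) : bool := dec (p A).
Definition sumchi (l : list U) (A : S) : bool := fold_right (fun p b => xorb (chi p A) b) false l.

Lemma sumchi_app l1 l2 A : sumchi (l1 ++ l2) A = xorb (sumchi l1 A) (sumchi l2 A).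
Proof. induction l1; simpl. reflexivity. rewrite IHl1. now rewrite xorb_assoc. Qed.

Require Import Defs.
From Stdlib Require Import Arith Lia List Bool Classical ClassicalEpsilon
  FunctionalExtensionality PropExtensionality ProofIrrelevance.
Import ListNotations.

Definition Gt := {h : S -> bool | exists l, Forall uf l /\ h = sumchi l}.
Definition gv (g : Gt) : S -> bool := proj1_sig g.

Lemma Gt_eq (g h : Gt) : gv g = gv h -> g = h.
Proof. destruct g as [g pg], h as [h ph]; simpl; intros E; subst. f_equal. apply proof_irrelevance. Qed.

Lemma Gt_eq' (g h : Gt) : (forall A, gv g A = gv h A) -> g = h.
Proof. intros; apply Gt_eq, functional_extensionality; auto. Qed.

Lemma zero_pf : exists l, Forall uf l /\ (fun _ : S => false) = sumchi l.
Proof. exists []. split; auto. Qed.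
Definition zero : Gt := exist _ _ zero_pf.

Lemma mul_pf (g h : Gt) : exists l, Forall uf l /\ (fun A => xorb (gv g A) (gv h A)) = sumchi l.
Proof. destruct g as [g [l1 [F1 E1]]], h as [h [l2 [F2 E2]]]; simpl. exists (l1 ++ l2).
  split. apply Forall_app; auto. apply functional_extensionality; intros A. subst.
  now rewrite sumchi_app. Qed.
Definition mul (g h : Gt) : Gt := exist _ _ (mul_pf g h).
Definition inv (g : Gt) : Gt := g.

Lemma gv_mul g h A : gv (mul g h) A = xorb (gv g A) (gv h A). Proof. reflexivity. Qed.
Lemma gv_zero A : gv zero A = false. Proof. reflexivity. Qed.

Lemma mul_assoc x y z : mul x (mul y z) = mul (mul x y) z.
Proof. apply Gt_eq'; intros; rewrite !gv_mul; now rewrite xorb_assoc. Qed.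
Lemma mul_0l x : mul zero x = x. Proof. apply Gt_eq'; intros; reflexivity. Qed.
Lemma mul_0r x : mul x zero = x. Proof. apply Gt_eq'; intros; rewrite gv_mul, gv_zero; apply xorb_false_r. Qed.
Lemma mul_xx x : mul x x = zero. Proof. apply Gt_eq'; intros; rewrite gv_mul; apply xorb_nilpotent. Qed.
Lemma mul_comm x y : mul x y = mul y x. Proof. apply Gt_eq'; intros; rewrite !gv_mul; apply xorb_comm. Qed.

Definition K (n : nat) (g : Gt) : Prop := exists l, Forall uf l /\ length l <= n /\ gv g = sumchi l.

Lemma K_mono n m g : n <= m -> K n g -> K m g.
Proof. intros H [l [F [L E]]]. exists l; repeat split; auto; lia. Qed.
Lemma K_mul n m g h : K n g -> K m h -> K (n + m) (mul g h).
Proof. intros [l1 [F1 [L1 E1]]] [l2 [F2 [L2 E2]]]. exists (l1 ++ l2). repeat split.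
  apply Forall_app; auto. rewrite length_app; lia.
  apply functional_extensionality; intros A. rewrite gv_mul, E1, E2, sumchi_app. reflexivity. Qed.
Lemma K_all g : exists n, K n g.
Proof. destruct g as [g [l [F E]]]. exists (length l), l. auto. Qed.
Lemma K_zero n : K n zero.
Proof. exists []. simpl; repeat split; auto; lia. Qed.

Definition agree (B : list S) (g g' : Gt) : Prop := forall A, In A B -> gv g' A = gv g A.
Definition op0 (V : Gt -> Prop) : Prop :=
  forall g, V g -> exists B, forall g', agree B g g' -> V g'.

Lemma agree_refl B g : agree B g g. Proof. intros A _; auto. Qed.
Lemma agree_sym B g h : agree B g h -> agree B h g. Proof. intros H A HA; symmetry; auto. Qed.
Lemma agree_trans B g h k : agree B g h -> agree B h k -> agree B g k.
Proof. intros H1 H2 A HA. rewrite H2, H1; auto. Qed.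
Lemma agree_sub B B' g h : (forall A, In A B -> In A B') -> agree B' g h -> agree B g h.
Proof. intros S H A HA; auto. Qed.
Lemma agree_app_l B B' g h : agree (B ++ B') g h -> agree B g h.
Proof. apply agree_sub; intros; apply in_or_app; auto. Qed.
Lemma agree_app_r B B' g h : agree (B ++ B') g h -> agree B' g h.
Proof. apply agree_sub; intros; apply in_or_app; auto. Qed.
Lemma agree_mul B x x' y y' : agree B x x' -> agree B y y' -> agree B (mul x y) (mul x' y').
Proof. intros H1 H2 A HA. rewrite !gv_mul, H1, H2; auto. Qed.

(* the k_omega topology *)
Definition op (W : Gt -> Prop) : Prop :=
  forall n, exists V, op0 V /\ forall g, K n g -> (W g <-> V g).

Lemma op0_op V : op0 V -> op V.
Proof. intros H n. exists V; split; auto. tauto. Qed.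

Lemma op0_translate V c : op0 V -> op0 (fun g => V (mul g c)).
Proof. intros H g Hg. destruct (H _ Hg) as [B HB]. exists B. intros g' Ha.
  apply HB. apply agree_mul; auto. apply agree_refl. Qed.

Lemma op_translate W c : op W -> op (fun g => W (mul g c)).
Proof. intros H n. destruct (K_all c) as [m Hm]. destruct (H (n + m)) as [V [HV E]].
  exists (fun g => V (mul g c)). split. apply op0_translate; auto.
  intros g Hg. apply E. apply K_mul; auto. Qed.

Require Import Defs.
From Stdlib Require Import Arith Lia List Bool Classical ClassicalEpsilon
  FunctionalExtensionality PropExtensionality ProofIrrelevance.
Import ListNotations.

Lemma list_choice {X Y} (R : X -> Y -> Prop) (l : list X) :
  (forall x, In x l -> exists y, R x y) ->
  exists ly, (forall y, In y ly -> exists x, In x l /\ R x y) /\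
             (forall x, In x l -> exists y, In y ly /\ R x y).
Proof. induction l as [|a l IH]; intros H.
  - exists []. split; intros ? [].
  - destruct (H a (or_introl eq_refl)) as [ya Ha].
    destruct IH as [ly [H1 H2]]. intros; apply H; right; auto.
    exists (ya :: ly). split.
    + intros y [<-|Hy]. exists a; split; auto. left; auto.
      destruct (H1 y Hy) as [x [Hx Rx]]; exists x; split; auto. right; auto.
    + intros x [<-|Hx]. exists ya; split; auto. left; auto.
      destruct (H2 x Hx) as [y [Hy Ry]]; exists y; split; auto. right; auto.
Qed.

Definition compact0 := compact_set op0.

Lemma op0_agree B x : op0 (agree B x).
Proof. intros g Hg. exists B. intros g' H. eapply agree_trans; eauto. Qed.

Lemma cover_fin {D : Type} (C : Gt -> Prop) (Q : Gt -> list S -> D -> Prop) :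
  compact0 C -> (forall x, C x -> exists B d, Q x B d) ->
  exists l : list (Gt * list S * D),
    (forall x B d, In (x,B,d) l -> C x /\ Q x B d) /\
    (forall x', C x' -> exists x B d, In (x,B,d) l /\ agree B x x').
Proof. intros HC HQ.
  set (F := fun Vs : Gt -> Prop => exists x B d, C x /\ Q x B d /\ Vs = agree B x).
  destruct (HC F) as [l0 [Hl0 Hcov]].
  - intros Vs [x [B [d [_ [_ ->]]]]]. apply op0_agree.
  - intros x Hx. destruct (HQ x Hx) as [B [d HB]]. exists (agree B x). split.
    exists x, B, d; auto. apply agree_refl.
  - destruct (list_choice (fun Vs (t : Gt * list S * D) => let '(x,B,d) := t in
        C x /\ Q x B d /\ Vs = agree B x) l0) as [l [H1 H2]].
    + intros Vs HVs. destruct (Hl0 Vs HVs) as [x [B [d H]]]. exists (x,B,d); auto.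
    + exists l. split.
      * intros x B d Hin. destruct (H1 _ Hin) as [Vs [_ [? [? _]]]]. auto.
      * intros x' Hx'. destruct (Hcov x' Hx') as [Vs [HVs Hx]].
        destruct (H2 Vs HVs) as [[[x B] d] [Hin [_ [_ E]]]]. subst Vs.
        exists x, B, d; auto.
Qed.

Definition concatB {D : Type} (l : list (Gt * list S * D)) : list S :=
  concat (map (fun t => let '(_,B,_) := t in B) l).

Lemma concatB_in {D : Type} (l : list (Gt * list S * D)) x B d A :
  In (x,B,d) l -> In A B -> In A (concatB l).
Proof. intros H1 H2. unfold concatB. apply in_concat. exists B. split; auto.
  apply in_map_iff. exists (x,B,d); auto. Qed.

Lemma agree_concatB {D : Type} (l : list (Gt * list S * D)) x B d g h :
  In (x,B,d) l -> agree (concatB l) g h -> agree B g h.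
Proof. intros Hin. apply agree_sub. intros A HA; eapply concatB_in; eauto. Qed.

Lemma unif (C1 C2 O : Gt -> Prop) : compact0 C1 -> compact0 C2 -> op0 O ->
  (forall x y, C1 x -> C2 y -> O (mul x y)) ->
  exists B, forall x y g, C1 x -> C2 y -> agree B (mul x y) g -> O g.
Proof. intros H1 H2 HO HC.
  assert (Step : forall x, C1 x -> exists Bx, forall x' y g, agree Bx x x' -> C2 y ->
            agree Bx (mul x' y) g -> O g).
  { intros x Hx.
    destruct (cover_fin (D:=unit) C2 (fun y B _ => forall g, agree B (mul x y) g -> O g) H2)
      as [l [Hl Hcov]].
    - intros y Hy. destruct (HO _ (HC x y Hx Hy)) as [B HB]. exists B, tt. auto.
    - exists (concatB l). intros x' y' g Hxx Hy' Hg.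
      destruct (Hcov y' Hy') as [y [B [d [Hin Hyy]]]].
      destruct (Hl _ _ _ Hin) as [_ HQ]. apply HQ.
      intros A HA. rewrite (agree_concatB l y B d _ _ Hin Hg A HA).
      rewrite !gv_mul. rewrite (agree_concatB l y B d _ _ Hin Hxx A HA), Hyy; auto. }
  destruct (cover_fin (D:=unit) C1 (fun x B _ => forall x' y g, agree B x x' -> C2 y ->
            agree B (mul x' y) g -> O g) H1) as [l [Hl Hcov]].
  - intros x Hx. destruct (Step x Hx) as [B HB]; exists B, tt; auto.
  - exists (concatB l). intros x' y g Hx' Hy Hg.
    destruct (Hcov x' Hx') as [x [B [d [Hin Hxx]]]].
    destruct (Hl _ _ _ Hin) as [_ HQ]. eapply HQ; eauto.
    eapply agree_concatB; eauto.
Qed.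

Definition sumset (C1 C2 : Gt -> Prop) : Gt -> Prop :=
  fun g => exists x y, C1 x /\ C2 y /\ g = mul x y.

Lemma sum_compact C1 C2 : compact0 C1 -> compact0 C2 -> compact0 (sumset C1 C2).
Proof. intros H1 H2 F HF Hcov.
  assert (Step : forall x, C1 x -> exists Bx lW, (forall W, In W lW -> F W) /\
     forall x' y, agree Bx x x' -> C2 y -> exists W, In W lW /\ W (mul x' y)).
  { intros x Hx.
    destruct (cover_fin (D:=Gt -> Prop) C2 (fun y B W => F W /\ forall g, agree B (mul x y) g -> W g) H2)
      as [l [Hl Hc]].
    - intros y Hy. destruct (Hcov (mul x y)) as [W [FW Wxy]]. exists x, y; auto.
      destruct (HF W FW _ Wxy) as [B HB]. exists B, W. auto.
    - exists (concatB l), (map (fun t : Gt * list S * (Gt -> Prop) => let '(_,_,W) := t in W) l).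
      split.
      + intros W HW. apply in_map_iff in HW. destruct HW as [[[y B] W'] [E Hin]]. subst.
        apply (Hl _ _ _ Hin).
      + intros x' y' Hxx Hy'. destruct (Hc y' Hy') as [y [B [W [Hin Hyy]]]].
        exists W. split. apply in_map_iff. exists (y,B,W); auto.
        destruct (Hl _ _ _ Hin) as [_ HQ]. apply HQ.
        intros A HA. rewrite !gv_mul. rewrite (agree_concatB l y B W _ _ Hin Hxx A HA), Hyy; auto. }
  destruct (cover_fin (D:=list (Gt -> Prop)) C1 (fun x B lW => (forall W, In W lW -> F W) /\
     forall x' y, agree B x x' -> C2 y -> exists W, In W lW /\ W (mul x' y)) H1) as [l [Hl Hc]].
  - intros x Hx. destruct (Step x Hx) as [B [lW H]]. exists B, lW; auto.
  - exists (concat (map (fun t : Gt * list S * list (Gt -> Prop) => let '(_,_,lW) := t in lW) l)).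
    split.
    + intros W HW. apply in_concat in HW. destruct HW as [lW [HlW HW]].
      apply in_map_iff in HlW. destruct HlW as [[[x B] lW'] [E Hin]]. subst.
      apply (Hl _ _ _ Hin); auto.
    + intros g [x' [y [Hx' [Hy ->]]]]. destruct (Hc x' Hx') as [x [B [lW [Hin Hxx]]]].
      destruct (Hl _ _ _ Hin) as [_ [_ HQ]]. destruct (HQ x' y Hxx Hy) as [W [HW1 HW2]].
      exists W. split; auto. apply in_concat. exists lW. split; auto.
      apply in_map_iff. exists (x,B,lW); auto.
Qed.

Lemma compact_ext (C C' : Gt -> Prop) : (forall g, C g <-> C' g) -> compact0 C -> compact0 C'.
Proof. intros E H F HF Hc. destruct (H F HF) as [l [H1 H2]].
  intros x Hx; apply Hc, E; auto. exists l; split; auto. intros x Hx; apply H2, E; auto. Qed.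

Lemma compact_closed_inter (C Cl : Gt -> Prop) : compact0 C -> op0 (fun g => ~ Cl g) ->
  compact0 (fun g => C g /\ Cl g).
Proof. intros HC HCl F HF Hcov.
  destruct (HC (fun W => F W \/ W = (fun g => ~ Cl g))) as [l [H1 H2]].
  - intros W [HW| ->]; auto.
  - intros x Hx. destruct (classic (Cl x)) as [Hc|Hc].
    + destruct (Hcov x (conj Hx Hc)) as [W [? ?]]; exists W; auto.
    + exists (fun g => ~ Cl g); auto.
  - exists (filter (fun W => dec (F W)) l). split.
    + intros W HW. apply filter_In in HW. apply dec_true; tauto.
    + intros x [Hx Hc]. destruct (H2 x Hx) as [W [HW Wx]]. exists W. split; auto.
      apply filter_In. split; auto. apply dec_true.
      destruct (H1 W HW) as [|E]; auto. subst. contradiction.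
Qed.

Lemma compact_sep (C : Gt -> Prop) x : compact0 C -> ~ C x ->
  exists B, forall g, agree B x g -> ~ C g.
Proof. intros HC Hx.
  destruct (cover_fin (D:=unit) C (fun c B _ => ~ agree B x c) HC) as [l [Hl Hcov]].
  - intros c Hc. assert (c <> x) by (intro; subst; auto).
    assert (exists A, gv c A <> gv x A).
    { apply NNPP; intro H'. apply H. apply Gt_eq'. intros A. apply NNPP; intro; eauto. }
    destruct H0 as [A HA]. exists [A], tt. intro Hag. apply HA. apply Hag. left; auto.
  - exists (concatB l). intros g Hg Cg. destruct (Hcov g Cg) as [c [B [d [Hin Hcg]]]].
    destruct (Hl _ _ _ Hin) as [_ HQ]. apply HQ.
    intros A HA. rewrite <- (Hcg A HA). apply (agree_concatB l c B d _ _ Hin Hg A HA).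
Qed.

Require Import Defs.
From Stdlib Require Import Arith Lia List Bool Classical ClassicalEpsilon
  FunctionalExtensionality PropExtensionality ProofIrrelevance.
Import ListNotations.

Definition mkG (l : list U) (H : Forall uf l) : Gt :=
  exist _ (sumchi l) (ex_intro _ l (conj H eq_refl)).
Lemma gv_mkG l H : gv (mkG l H) = sumchi l. Proof. reflexivity. Qed.

Lemma uf_Forall q (Es : list S) : uf q -> (forall E, In E Es -> q E) ->
  q (fun n => forall E, In E Es -> E n).
Proof. intros Hq. induction Es as [|E Es IH]; intros H.
  - eapply (uf_mono q Hq); [|apply (uf_T q Hq)]. intros n _ E [].
  - eapply (uf_mono q Hq); [|apply (uf_and q Hq _ _ (H E (or_introl eq_refl)) (IH (fun E' h => H E' (or_intror h))))].
    simpl. intros n [h1 h2] E' [<-|h]; auto; apply h2; auto.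
Qed.

Lemma uf_union_list q (Es : list S) : uf q -> (forall n, exists E, In E Es /\ E n) ->
  exists E, In E Es /\ q E.
Proof. intros Hq H. apply NNPP; intro Hn.
  assert (Hall : forall E', In E' (map (fun E n => ~ E n) Es) -> q E').
  { intros E' HE. apply in_map_iff in HE. destruct HE as [E [<- HE]].
    apply (uf_neg q Hq). intro; apply Hn; eauto. }
  apply (uf_Forall q _ Hq) in Hall. apply (uf_F q Hq). eapply (uf_mono q Hq); [|exact Hall].
  simpl. intros n Hn'. destruct (H n) as [E [HE En]].
  exact (Hn' _ (in_map (fun E n => ~ E n) _ _ HE) En).
Qed.

Lemma sumchi1 p A : sumchi [p] A = chi p A.
Proof. simpl. apply xorb_false_r. Qed.

Lemma K1_cases g : K 1 g -> g = zero \/ exists p, uf p /\ gv g = sumchi [p].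
Proof. intros [l [F [L E]]]. destruct l as [|p [|q l]]; simpl in L; try lia.
  - left. apply Gt_eq. rewrite E. reflexivity.
  - right. exists p. inversion F; auto.
Qed.

Lemma cell_in p (B : list S) : uf p -> p (fun n => forall A, In A B -> (A n <-> p A)).
Proof. intros Hp. induction B as [|A B IH].
  - eapply (uf_mono p Hp); [|apply (uf_T p Hp)]. intros n _ A [].
  - destruct (classic (p A)) as [HA|HA].
    + eapply (uf_mono p Hp); [|apply (uf_and p Hp _ _ HA IH)].
      simpl. intros n [h1 h2] A' [<-|h]. tauto. auto.
    + pose proof HA as HA0. apply (uf_neg p Hp) in HA.
      eapply (uf_mono p Hp); [|apply (uf_and p Hp _ _ HA IH)].
      simpl. intros n [h1 h2] A' [<-|h]. split; intro; contradiction. auto.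
Qed.

Lemma K1_compact : compact0 (K 1).
Proof. intros F HF Hcov.
  set (good := fun E : S => exists W, F W /\ forall q, uf q -> q E ->
                 forall g, gv g = sumchi [q] -> W g).
  assert (Fact1 : forall p, uf p -> exists E, good E /\ p E).
  { intros p Hp. assert (Hpf : Forall uf [p]) by auto.
    destruct (Hcov (mkG [p] Hpf)) as [W [FW Wg]].
    { exists [p]. split; auto. }
    destruct (HF W FW _ Wg) as [B HB].
    exists (fun n => forall A, In A B -> (A n <-> p A)). split; [|apply cell_in; auto].
    exists W. split; auto. intros q Hq HqE g Hg. apply HB. intros A HA.
    rewrite Hg, gv_mkG, !sumchi1. unfold chi.
    assert (q A <-> p A).
    { split; intro H.
      - apply NNPP; intro H'. apply (uf_neg p Hp) in H'.
        apply (uf_notboth q Hq A H). eapply (uf_mono q Hq); [|exact HqE].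
        simpl. intros n Hn Hn'. apply (Hn A HA) in Hn'. apply (uf_notboth p Hp A); auto.
      - eapply (uf_mono q Hq); [|exact HqE]. simpl. intros n Hn. apply (Hn A HA); auto. }
    unfold dec. destruct (excluded_middle_informative (p A)), (excluded_middle_informative (q A)); tauto. }
  destruct (Hcov zero (K_zero 1)) as [W0 [FW0 W0z]].
  apply NNPP; intro Hno.
  set (Fil := fun A : S => exists Es : list S, (forall E, In E Es -> good E) /\
                 forall n, (forall E, In E Es -> ~ E n) -> A n).
  destruct (uf_exists Fil) as [q [Hq Hqf]].
  - exists []. split. intros ? []. auto.
  - intros A B [E1 [G1 H1]] [E2 [G2 H2]]. exists (E1 ++ E2). split.
    intros E HE; apply in_app_or in HE; destruct HE; auto.
    intros n Hn. split; [apply H1|apply H2]; intros E HE; apply Hn; apply in_or_app; auto.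
  - intros A B HAB [Es [G H]]. exists Es; split; auto.
  - intros [Es [G H]]. apply Hno.
    destruct (list_choice (fun E W => F W /\ forall q, uf q -> q E ->
                 forall g, gv g = sumchi [q] -> W g) Es) as [Ws [HW1 HW2]].
    { intros E HE. apply G; auto. }
    exists (W0 :: Ws). split.
    + intros W [<-|HW]; auto. destruct (HW1 W HW) as [E [_ [? _]]]; auto.
    + intros g Hg. destruct (K1_cases g Hg) as [->|[p [Hp Hgp]]].
      * exists W0; split; auto. left; auto.
      * destruct (uf_union_list p Es Hp) as [E [HE pE]].
        { intros n. apply NNPP; intro Hn. apply (H n). intros E HE En. apply Hn; eauto. }
        destruct (HW2 E HE) as [W [HW [_ HWE]]]. exists W. split. right; auto.
        eapply HWE; eauto.
  - destruct (Fact1 q Hq) as [E [HE qE]].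
    apply (uf_notboth q Hq E qE). apply Hqf. exists [E]. split.
    intros E' [<-|[]]; auto. intros n Hn. apply Hn. left; auto.
Qed.

Lemma K0_compact : compact0 (K 0).
Proof. intros F HF Hcov. destruct (Hcov zero (K_zero 0)) as [W [FW Wz]].
  exists [W]. split. intros W' [<-|[]]; auto.
  intros g [l [_ [L E]]]. destruct l; simpl in L; try lia.
  exists W. split. left; auto. replace g with zero; auto. apply Gt_eq. rewrite E; reflexivity.
Qed.

Lemma K_S n g : K (Datatypes.S n) g <-> sumset (K n) (K 1) g.
Proof. split.
  - intros [l [Fl [L E]]]. destruct l as [|p l].
    + exists g, zero. split. exists []. simpl; repeat split; auto; lia.
      split. apply K_zero. symmetry; apply mul_0r.
    + inversion Fl; subst. exists (mkG l H2), (mkG [p] (Forall_cons _ H1 (Forall_nil _))).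
      split. exists l. simpl in L. repeat split; auto; lia.
      split. exists [p]. simpl; repeat split; auto; lia.
      apply Gt_eq'. intros A. rewrite gv_mul, !gv_mkG, E, sumchi1. simpl. apply xorb_comm.
  - intros [x [y [Hx [Hy ->]]]]. replace (Datatypes.S n) with (n + 1) by lia. apply K_mul; auto.
Qed.

Lemma K_compact n : compact0 (K n).
Proof. induction n. apply K0_compact.
  eapply compact_ext. intros g; symmetry; apply K_S. apply sum_compact; auto. apply K1_compact.
Qed.

Require Import Defs.
From Stdlib Require Import Arith Lia List Bool Classical ClassicalEpsilon
  FunctionalExtensionality PropExtensionality ProofIrrelevance.
Import ListNotations.

Section Nbhd.
Variable W : Gt -> Prop.
Hypothesis HW : op W.
Hypothesis W0 : W zero.

Definition stepB (n : nat) (P : Gt -> Prop) : list S :=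
  epsilon (inhabits []) (fun B => forall x y g, P x -> P y -> agree B (mul x y) g ->
                              K (n + n + 2) g -> W g).

Fixpoint Pn (n : nat) : Gt -> Prop :=
  match n with
  | 0 => fun g => g = zero
  | Datatypes.S m => fun g => K (Datatypes.S m) g /\ exists p, Pn m p /\ agree (stepB m (Pn m)) p g
  end.

Lemma Pn_inv n : compact0 (Pn n) /\ (forall g, Pn n g -> K n g) /\
  (forall x y, Pn n x -> Pn n y -> W (mul x y)).
Proof. induction n as [|n [IHc [IHK IHW]]].
  - split; [|split].
    + intros F HF Hcov. destruct (Hcov zero eq_refl) as [U [FU Uz]]. exists [U].
      split. intros U' [<-|[]]; auto. intros g Hg; simpl in Hg; subst. exists U; split; auto; left; auto.
    + intros g Hg; simpl in Hg; subst. apply K_zero.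
    + intros x y Hx Hy; simpl in *; subst. rewrite mul_0l; auto.
  - assert (Hspec : forall x y g, Pn n x -> Pn n y -> agree (stepB n (Pn n)) (mul x y) g ->
                 K (n + n + 2) g -> W g).
    { unfold stepB. apply epsilon_spec.
      destruct (HW (n + n + 2)) as [V [HV EV]].
      destruct (unif (Pn n) (Pn n) V IHc IHc HV) as [B HB].
      - intros x y Hx Hy.
        assert (Hk : K (n + n + 2) (mul x y)).
        { apply K_mono with (n + n). lia. apply K_mul; auto. }
        apply (proj1 (EV _ Hk)). apply IHW; auto.
      - exists B. intros x y g Hx Hy Hg HK. apply (proj2 (EV _ HK)). apply (HB x y g Hx Hy Hg). }
    split; [|split].
    + eapply compact_ext; [|apply (compact_closed_inter (K (Datatypes.S n))
          (fun g => exists p, Pn n p /\ agree (stepB n (Pn n)) p g))].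
      * intros g. simpl. tauto.
      * apply K_compact.
      * intros g Hg. exists (stepB n (Pn n)). intros g' Hg' [p [Hp Hpg]]. apply Hg.
        exists p. split; auto. eapply agree_trans; eauto. apply agree_sym; auto.
    + intros g [Hg _]; auto.
    + intros x y [Kx [p [Hp Hpx]]] [Ky [q [Hq Hqy]]]. apply (Hspec p q); auto.
      apply agree_mul; auto. replace (n + n + 2) with (Datatypes.S n + Datatypes.S n) by lia.
      apply K_mul; auto.
Qed.

Lemma Pn_mono n m g : n <= m -> Pn n g -> Pn m g.
Proof. induction 1; auto. intros H'. simpl. split.
  - apply K_mono with m. lia. apply (proj1 (proj2 (Pn_inv m))); auto.
  - exists g. split; auto. apply agree_refl.
Qed.

Definition Pall (g : Gt) : Prop := exists n, Pn n g.

Lemma Pall_op : op Pall.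
Proof. intros m. exists (fun g => exists n, m <= n /\ exists p, Pn n p /\ agree (stepB n (Pn n)) p g).
  split.
  - intros g [n [Hmn [p [Hp Hpg]]]]. exists (stepB n (Pn n)). intros g' Hg'.
    exists n. split; auto. exists p. split; auto. eapply agree_trans; eauto.
  - intros g Hg. split.
    + intros [j Hj]. exists (Nat.max j m). split. lia. exists g. split.
      apply Pn_mono with j; auto; lia. apply agree_refl.
    + intros [n [Hmn [p [Hp Hpg]]]]. exists (Datatypes.S n). simpl. split.
      apply K_mono with m; auto; lia. exists p; auto.
Qed.

Lemma Pall_zero : Pall zero. Proof. exists 0. reflexivity. Qed.

Lemma Pall_mul x y : Pall x -> Pall y -> W (mul x y).
Proof. intros [i Hi] [j Hj]. apply (proj2 (proj2 (Pn_inv (Nat.max i j)))).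
  apply Pn_mono with i; auto; lia. apply Pn_mono with j; auto; lia. Qed.
End Nbhd.

Lemma op_topology : is_topology op.
Proof. split; [|split].
  - apply op0_op. intros g _. exists []. auto.
  - intros F HF n.
    exists (fun x => exists Uo, F Uo /\ exists V, op0 V /\ (forall g, K n g -> (Uo g <-> V g)) /\ V x).
    split.
    + intros g [Uo [FU [V [HV [E Vg]]]]]. destruct (HV g Vg) as [B HB]. exists B.
      intros g' Hg'. exists Uo. split; auto. exists V; auto.
    + intros g Hg. split.
      * intros [Uo [FU Ug]]. destruct (HF Uo FU n) as [V [HV E]]. exists Uo. split; auto.
        exists V. split; [exact HV|split; [exact E|apply E; auto]].
      * intros [Uo [FU [V [HV [E Vg]]]]]. exists Uo. split; auto. apply E; auto.
  - intros U1 U2 H1 H2 n. destruct (H1 n) as [V1 [HV1 E1]], (H2 n) as [V2 [HV2 E2]].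
    exists (fun g => V1 g /\ V2 g). split.
    + intros g [g1 g2]. destruct (HV1 g g1) as [B1 HB1], (HV2 g g2) as [B2 HB2].
      exists (B1 ++ B2). intros g' Hg'. split. apply HB1. eapply agree_app_l; eauto.
      apply HB2; eapply agree_app_r; eauto.
    + intros g Hg. rewrite (E1 g Hg), (E2 g Hg). tauto.
Qed.

Lemma op_hausdorff : hausdorff op.
Proof. intros x y Hxy.
  assert (exists A, gv x A <> gv y A) as [A HA].
  { apply NNPP; intro H'. apply Hxy. apply Gt_eq'. intros A. apply NNPP; intro; eauto. }
  exists (fun g => gv g A = gv x A), (fun g => gv g A = gv y A).
  split; [|split; [|split; [|split]]]; auto.
  - apply op0_op. intros g Hg. exists [A]. intros g' H'. rewrite <- Hg. apply H'. left; auto.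
  - apply op0_op. intros g Hg. exists [A]. intros g' H'. rewrite <- Hg. apply H'. left; auto.
  - intros z H1 H2. apply HA. congruence.
Qed.

Lemma mul_cont : continuous2 op op mul.
Proof. intros a b W HW Hab.
  set (W' := fun g => W (mul g (mul a b))).
  assert (HW' : op W') by (apply op_translate; auto).
  assert (W'0 : W' zero) by (unfold W'; rewrite mul_0l; auto).
  exists (fun x => Pall W' (mul x a)), (fun y => Pall W' (mul y b)).
  split; [|split; [|split; [|split]]].
  - apply op_translate; eapply Pall_op; eauto.
  - apply op_translate; eapply Pall_op; eauto.
  - rewrite mul_xx. eapply Pall_zero; eauto.
  - rewrite mul_xx. eapply Pall_zero; eauto.
  - intros x y Hx Hy. pose proof (Pall_mul W' HW' W'0 _ _ Hx Hy) as H. unfold W' in H.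
    replace (mul x y) with (mul (mul (mul x a) (mul y b)) (mul a b)); auto.
    apply Gt_eq'. intros A. rewrite !gv_mul.
    destruct (gv x A), (gv y A), (gv a A), (gv b A); reflexivity.
Qed.

Lemma inv_cont : continuous op op inv.
Proof. intros W HW. exact HW. Qed.

Lemma topgroup : topological_group op mul inv zero.
Proof. split; [apply op_topology|]. split; [apply op_hausdorff|].
  split; [apply mul_assoc|]. split; [apply mul_0l|]. split; [apply mul_0r|].
  split; [intros; apply mul_xx|]. split; [intros; apply mul_xx|].
  split; [apply mul_cont|apply inv_cont].
Qed.

Lemma K_op_compact n : compact_set op (K n).
Proof. intros F HF Hcov.
  destruct (K_compact n (fun V => exists Uo, F Uo /\ op0 V /\ forall g, K n g -> (Uo g <-> V g)))
    as [l0 [H1 H2]].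
  - intros V [_ [_ [HV _]]]; auto.
  - intros x Hx. destruct (Hcov x Hx) as [Uo [FU Ux]]. destruct (HF Uo FU n) as [V [HV E]].
    exists V. split. exists Uo; auto. apply E; auto.
  - destruct (list_choice (fun V Uo => F Uo /\ forall g, K n g -> (Uo g <-> V g)) l0) as [l [L1 L2]].
    + intros V HV. destruct (H1 V HV) as [Uo [FU [_ E]]]. exists Uo; auto.
    + exists l. split.
      * intros Uo HU. destruct (L1 Uo HU) as [V [_ [? _]]]; auto.
      * intros x Hx. destruct (H2 x Hx) as [V [HV Vx]]. destruct (L2 V HV) as [Uo [HU [_ E]]].
        exists Uo. split; auto. apply E; auto.
Qed.

Lemma kspace : k_space op.
Proof. intros A HA n. destruct (HA (K n) (K_op_compact n)) as [C [HC E]].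
  destruct (HC n) as [V [HV EV]]. exists V. split; auto.
  intros g Hg. rewrite <- EV; auto. rewrite (E g Hg). tauto.
Qed.

From Stdlib Require Import Arith Lia List Bool Classical ClassicalEpsilon
  FunctionalExtensionality PropExtensionality ProofIrrelevance.
Import ListNotations.

Definition inf (P : nat -> Prop) : Prop := forall N, exists k, N <= k /\ P k.

Section REC.
Context {T : Type} (P : nat -> Prop) (Phi Psi : nat -> T -> Prop).
Hypothesis HP : inf P.
Hypothesis Hstep : forall Z : nat -> Prop, inf Z -> (forall k, Z k -> P k) ->
  exists k t, Z k /\ Phi k t /\ inf (fun k' => Z k' /\ Psi k' t).

Definition stT := {Z : nat -> Prop | inf Z /\ forall k, Z k -> P k}.

Definition choose (z : stT) : {kt : nat * T | proj1_sig z (fst kt) /\ Phi (fst kt) (snd kt) /\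
   inf (fun k' => proj1_sig z k' /\ Psi k' (snd kt))}.
Proof. destruct z as [Z [HZ HZP]]. apply constructive_indefinite_description.
  destruct (Hstep Z HZ HZP) as [k [t H]]. exists (k,t). exact H. Defined.

Definition next (z : stT) : stT.
Proof. refine (exist _ (fun k' => proj1_sig z k' /\ Psi k' (snd (proj1_sig (choose z))) /\
           fst (proj1_sig (choose z)) < k') _).
  destruct (proj2_sig (choose z)) as [_ [_ Hinf]]. split.
  - intros N. destruct (Hinf (Nat.max N (Datatypes.S (fst (proj1_sig (choose z)))))) as [k [Hk [H1 H2]]].
    exists k. repeat split; auto; lia.
  - intros k [Hk _]. apply (proj2 (proj2_sig z)). auto.
Defined.

Definition start : stT := exist _ P (conj HP (fun k h => h)).

Fixpoint st (i : nat) : stT := match i with 0 => start | Datatypes.S i => next (st i) end.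

Definition ks (i : nat) : nat := fst (proj1_sig (choose (st i))).
Definition ts (i : nat) : T := snd (proj1_sig (choose (st i))).

Lemma st_mono i j : i <= j -> forall k, proj1_sig (st j) k -> proj1_sig (st i) k.
Proof. induction 1; auto. intros k Hk. apply IHle. simpl in Hk. apply Hk. Qed.

Lemma REC_main : (forall i, P (ks i) /\ Phi (ks i) (ts i)) /\
  (forall i j, i < j -> ks i < ks j /\ Psi (ks j) (ts i)).
Proof. split.
  - intros i. unfold ks, ts. destruct (proj2_sig (choose (st i))) as [H1 [H2 _]]. split; auto.
    apply (proj2 (proj2_sig (st i))). auto.
  - intros i j Hij. assert (H : proj1_sig (st (Datatypes.S i)) (ks j)).
    { apply st_mono with j. lia. unfold ks. apply (proj2_sig (choose (st j))). }
    simpl in H. destruct H as [_ [H1 H2]]. split; auto.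
Qed.
End REC.

Lemma REC {T : Type} (P : nat -> Prop) (Phi Psi : nat -> T -> Prop) : inf P ->
  (forall Z : nat -> Prop, inf Z -> (forall k, Z k -> P k) ->
     exists k t, Z k /\ Phi k t /\ inf (fun k' => Z k' /\ Psi k' t)) ->
  exists (ks : nat -> nat) (ts : nat -> T), (forall i, P (ks i) /\ Phi (ks i) (ts i)) /\
    (forall i j, i < j -> ks i < ks j /\ Psi (ks j) (ts i)).
Proof. intros HP Hs. exists (ks P Phi Psi HP Hs), (ts P Phi Psi HP Hs). apply REC_main. Qed.

Lemma ks_ge (ks : nat -> nat) : (forall i j, i < j -> ks i < ks j) -> forall i, i <= ks i.
Proof. intros H. induction i. lia. specialize (H i (Datatypes.S i) ltac:(lia)). lia. Qed.

Lemma uf_Forall_nat q (E : nat -> S) i : uf q -> (forall j, j < i -> q (E j)) ->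
  q (fun n => forall j, j < i -> E j n).
Proof. intros Hq. induction i as [|i IH]; intros H.
  - eapply (uf_mono q Hq); [|apply (uf_T q Hq)]. intros n _ j Hj; lia.
  - eapply (uf_mono q Hq); [|apply (uf_and q Hq _ _ (H i ltac:(lia)) (IH (fun j h => H j ltac:(lia))))].
    intros n [h1 h2] j Hj. destruct (Nat.eq_dec j i). subst; auto. apply h2; lia.
Qed.

From Stdlib Require Import Arith Lia List Bool Classical ClassicalEpsilon
  FunctionalExtensionality PropExtensionality ProofIrrelevance.
Import ListNotations.

Lemma inf_pick Z N : inf Z -> exists k, N <= k /\ Z k.
Proof. intros H; apply H. Qed.

Lemma core1 (P : nat -> Prop) (o : nat -> U) (r : U) : inf P -> uf r ->
  (forall k, P k -> uf (o k) /\ o k <> r) ->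
  (forall C, exists N, forall k, N <= k -> P k -> (o k C <-> r C)) -> False.
Proof. intros HP Hr Ho H1.
  destruct (REC (T:=S) P (fun k D => o k D /\ ~ r D) (fun k' D => ~ o k' D) HP) as [ks [ts [R1 R2]]].
  { intros Z HZ HZP. destruct (HZ 0) as [k [_ Zk]]. destruct (Ho k (HZP k Zk)) as [Hok Hne].
    destruct (uf_sep (o k) r Hok Hr Hne) as [D [D1 D2]]. exists k, D. repeat split; auto.
    destruct (H1 D) as [N HN]. intros N'. destruct (HZ (Nat.max N N')) as [k' [Hk' Zk']].
    exists k'. repeat split; auto; try lia. intro Hc. apply D2. apply (HN k'); auto; lia. }
  assert (Hks : forall i, i <= ks i) by (apply ks_ge; intros; apply R2; auto).
  set (Q := fun i n => ts i n /\ forall j, j < i -> ~ ts j n).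
  assert (HQ : forall i, o (ks i) (Q i)).
  { intros i. destruct (R1 i) as [HPi [Hoi _]]. destruct (Ho _ HPi) as [Huf _].
    assert (Hall : o (ks i) (fun n => forall j, j < i -> ~ ts j n)).
    { apply (uf_Forall_nat _ (fun j n => ~ ts j n) i Huf).
      intros j Hj. apply (uf_neg _ Huf). apply (R2 j i Hj). }
    eapply (uf_mono _ Huf); [|apply (uf_and _ Huf _ _ Hoi Hall)].
    intros n [a b]; split; auto. }
  set (Ab := fun (b : bool) n => exists i, Nat.even i = b /\ Q i n).
  assert (Hdisj : forall n, Ab true n -> Ab false n -> False).
  { intros n [i [Hi [Ti Qi]]] [i' [Hi' [Ti' Qi']]].
    destruct (lt_eq_lt_dec i i') as [[Hlt|Heq]|Hgt].
    - apply (Qi' i Hlt Ti).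
    - subst. congruence.
    - apply (Qi i' Hgt Ti'). }
  assert (exists b, ~ r (Ab b)) as [b Hb].
  { apply NNPP; intro Hn. apply (uf_F r Hr).
    assert (r (Ab true)) by (apply NNPP; intro; apply Hn; exists true; auto).
    assert (r (Ab false)) by (apply NNPP; intro; apply Hn; exists false; auto).
    eapply (uf_mono r Hr); [|apply (uf_and r Hr _ _ H H0)]. intros n [a c]; exact (Hdisj n a c). }
  destruct (H1 (Ab b)) as [N HN].
  set (i := (if b then 0 else 1) + 2 * N).
  assert (Hev : Nat.even i = b).
  { unfold i. destruct b. rewrite Nat.add_0_l, Nat.even_mul; reflexivity.
    rewrite Nat.even_add, Nat.even_mul. reflexivity. }
  apply Hb. apply (HN (ks i)). pose proof (Hks i); unfold i in *; lia. apply R1.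
  destruct (Ho _ (proj1 (R1 i))) as [Huf _].
  eapply (uf_mono _ Huf); [|apply HQ]. intros n Hn. exists i; auto.
Qed.

From Stdlib Require Import Arith Lia List Bool Classical ClassicalEpsilon
  FunctionalExtensionality PropExtensionality ProofIrrelevance.
Import ListNotations.

Lemma sep4 a b c d : uf a -> uf b -> uf c -> uf d -> a <> c -> a <> d -> b <> c -> b <> d ->
  exists W, a W /\ b W /\ ~ c W /\ ~ d W.
Proof. intros Ha Hb Hc Hd H1 H2 H3 H4.
  destruct (uf_sep a c Ha Hc H1) as [X1 [X1a X1c]].
  destruct (uf_sep a d Ha Hd H2) as [X2 [X2a X2d]].
  destruct (uf_sep b c Hb Hc H3) as [X3 [X3b X3c]].
  destruct (uf_sep b d Hb Hd H4) as [X4 [X4b X4d]].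
  exists (fun n => (X1 n /\ X2 n) \/ (X3 n /\ X4 n)). repeat split.
  - eapply (uf_mono a Ha); [|apply (uf_and a Ha _ _ X1a X2a)]. simpl; tauto.
  - eapply (uf_mono b Hb); [|apply (uf_and b Hb _ _ X3b X4b)]. simpl; tauto.
  - intro H. destruct (uf_or c Hc _ _ H) as [H'|H'].
    + apply X1c. eapply (uf_mono c Hc); [|exact H']. simpl; tauto.
    + apply X3c. eapply (uf_mono c Hc); [|exact H']. simpl; tauto.
  - intro H. destruct (uf_or d Hd _ _ H) as [H'|H'].
    + apply X2d. eapply (uf_mono d Hd); [|exact H']. simpl; tauto.
    + apply X4d. eapply (uf_mono d Hd); [|exact H']. simpl; tauto.
Qed.

Lemma core2 (P : nat -> Prop) (p q : nat -> U) : inf P ->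
  (forall k, P k -> uf (p k) /\ uf (q k) /\ p k <> q k) ->
  (forall C, exists N, forall k, N <= k -> P k -> (p k C <-> q k C)) -> False.
Proof. intros HP Hpq H.
  destruct (classic (exists r, inf (fun k => P k /\ (p k = r \/ q k = r)))) as [[r Hr]|Hnr].
  -
    assert (Hufr : uf r).
    { destruct (Hr 0) as [k [_ [Pk [E|E]]]]; subst; apply (Hpq k Pk). }
    set (o := fun k => if excluded_middle_informative (p k = r) then q k else p k).
    apply (core1 (fun k => P k /\ (p k = r \/ q k = r)) o r Hr Hufr).
    + intros k [Pk Hk]. destruct (Hpq k Pk) as [H1 [H2 H3]]. unfold o.
      destruct excluded_middle_informative as [E|E]; split; auto.
      * intro E'. apply H3. congruence.
    + intros C. destruct (H C) as [N HN]. exists N. intros k Hk [Pk Hpk].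
      specialize (HN k Hk Pk). unfold o. destruct excluded_middle_informative as [E|E].
      * rewrite <- E. tauto.
      * destruct Hpk as [E'|E']. contradiction. rewrite <- E'. exact HN.
  - assert (Hb : forall r, exists N, forall k, N <= k -> P k -> p k <> r /\ q k <> r).
    { intros r. apply NNPP; intro Hn. apply Hnr. exists r. intros N.
      apply NNPP; intro Hn2. apply Hn. exists N. intros k Hk Pk.
      split; intro E; apply Hn2; exists k; auto. }
    destruct (REC (T:=S*S) P (fun k t => p k (fst t) /\ q k (fst t) /\ p k (snd t) /\ ~ q k (snd t))
                (fun k' t => ~ p k' (fst t) /\ ~ q k' (fst t)) HP) as [ks [ts [R1 R2]]].
    + intros Z HZ HZP.
      destruct (HZ 0) as [k1 [_ Z1]].
      destruct (Hb (p k1)) as [N1 HN1]. destruct (Hb (q k1)) as [N2 HN2].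
      destruct (HZ (Nat.max N1 N2)) as [k2 [Hk2 Z2]].
      destruct (Hpq k1 (HZP _ Z1)) as [Hp1 [Hq1 Hne1]].
      destruct (Hpq k2 (HZP _ Z2)) as [Hp2 [Hq2 Hne2]].
      destruct (HN1 k2 ltac:(lia) (HZP _ Z2)) as [D1 D2].
      destruct (HN2 k2 ltac:(lia) (HZP _ Z2)) as [D3 D4].
      destruct (sep4 (p k1) (q k1) (p k2) (q k2)) as [W1 [W1a [W1b [W1c W1d]]]]; auto.
      destruct (uf_sep (p k1) (q k1) Hp1 Hq1 Hne1) as [E1 [E1a E1b]].
      destruct (uf_sep (p k2) (q k2) Hp2 Hq2 Hne2) as [E2 [E2a E2b]].
      set (W2 := fun n => ~ W1 n).
      assert (W2c : p k2 W2) by (apply (uf_neg _ Hp2); auto).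
      assert (W2d : q k2 W2) by (apply (uf_neg _ Hq2); auto).
      destruct (classic (inf (fun k' => Z k' /\ ~ p k' W1 /\ ~ q k' W1))) as [I1|I1].
      { exists k1, (W1, E1). simpl. repeat split; auto. }
      destruct (classic (inf (fun k' => Z k' /\ ~ p k' W2 /\ ~ q k' W2))) as [I2|I2].
      { exists k2, (W2, E2). simpl. repeat split; auto. }
      exfalso.
      assert (Ev : forall W, ~ inf (fun k' => Z k' /\ ~ p k' W /\ ~ q k' W) ->
                 exists N, forall k, N <= k -> Z k -> p k W).
      { intros W HW. destruct (H W) as [N5 HN5].
        assert (exists N, forall k, N <= k -> Z k -> ~ (~ p k W /\ ~ q k W)) as [N6 HN6].
        { apply NNPP; intro Hn. apply HW. intros N. apply NNPP; intro Hn'. apply Hn.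
          exists N. intros k Hk Zk Hc. apply Hn'. exists k; auto. }
        exists (Nat.max N5 N6). intros k Hk Zk.
        specialize (HN5 k ltac:(lia) (HZP _ Zk)). specialize (HN6 k ltac:(lia) Zk). tauto. }
      destruct (Ev W1 I1) as [N7 HN7]. destruct (Ev W2 I2) as [N8 HN8].
      destruct (HZ (Nat.max N7 N8)) as [k [Hk Zk]].
      destruct (Hpq k (HZP _ Zk)) as [Hpk _].
      apply (uf_notboth _ Hpk W1). apply HN7; auto; lia. apply HN8; auto; lia.
    + assert (Hks : forall i, i <= ks i) by (apply ks_ge; intros; apply R2; auto).
      set (W := fun i => fst (ts i)). set (E := fun i => snd (ts i)).
      set (R := fun i n => W i n /\ forall j, j < i -> ~ W j n).
      set (A := fun n => exists i, E i n /\ R i n).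
      assert (HR : forall i u, uf u -> u (W i) -> (forall j, j < i -> ~ u (W j)) -> u (R i)).
      { intros i u Hu HW HWj.
        assert (Hall : u (fun n => forall j, j < i -> ~ W j n)).
        { apply (uf_Forall_nat _ (fun j n => ~ W j n) i Hu). intros j Hj. apply (uf_neg _ Hu). auto. }
        eapply (uf_mono _ Hu); [|apply (uf_and _ Hu _ _ HW Hall)]. intros n [a b]; split; auto. }
      assert (HRA : forall i n, R i n -> (A n <-> E i n)).
      { intros i n [Wi Hi]. split.
        - intros [i' [Ei' [Wi' Hi']]]. destruct (lt_eq_lt_dec i i') as [[Hlt|Heq]|Hgt].
          + exfalso. apply (Hi' i Hlt Wi).
          + subst; auto.
          + exfalso. apply (Hi i' Hgt Wi').
        - intros Ei. exists i. split; auto. split; auto. }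
      assert (HuA : forall i u, uf u -> u (R i) -> (u A <-> u (E i))).
      { intros i u Hu HuR. split; intro Hx.
        - eapply (uf_mono _ Hu); [|apply (uf_and _ Hu _ _ Hx HuR)]. intros n [a b]. apply (HRA i n b); auto.
        - eapply (uf_mono _ Hu); [|apply (uf_and _ Hu _ _ Hx HuR)]. intros n [a b]. apply (HRA i n b); auto. }
      destruct (H A) as [N HN].
      destruct (R1 N) as [PN [Hp1 [Hq1 [Hp2 Hq2]]]].
      destruct (Hpq _ PN) as [Hup [Huq _]].
      assert (Hj : forall j, j < N -> ~ p (ks N) (W j) /\ ~ q (ks N) (W j)).
      { intros j Hj. apply (R2 j N Hj). }
      assert (pA : p (ks N) A).
      { apply (HuA N _ Hup). apply HR; auto. intros j h; apply Hj; auto. exact Hp2. }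
      assert (qA : ~ q (ks N) A).
      { intro Hc. apply Hq2. apply (HuA N _ Huq); auto. apply HR; auto. intros j h; apply Hj; auto. }
      apply qA. apply (HN (ks N) (Hks N) PN). exact pA.
Qed.

From Stdlib Require Import Arith Lia List Bool Classical ClassicalEpsilon
  FunctionalExtensionality PropExtensionality ProofIrrelevance.
Import ListNotations.

Definition filt (C : S) (l : list U) : list U := filter (fun p => chi p C) l.

Lemma dec_ext P Q : (P <-> Q) -> dec P = dec Q.
Proof. intros H. unfold dec. destruct excluded_middle_informative, excluded_middle_informative; tauto. Qed.

Lemma sumchi_filt C l B : Forall uf l -> sumchi (filt C l) B = sumchi l (fun n => B n /\ C n).
Proof. induction 1 as [|p l Hp Hl IH]; simpl; auto. unfold chi at 1 2. unfold filt in *.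
  destruct (classic (p C)) as [HC|HC].
  - assert (dec (p C) = true) as -> by (apply dec_true; auto). simpl. rewrite IH. f_equal.
    apply dec_ext. split; intro H.
    + eapply (uf_mono p Hp); [|apply (uf_and p Hp _ _ H HC)]. auto.
    + eapply (uf_mono p Hp); [|exact H]. intros n [a b]; auto.
  - assert (dec (p C) = false) as -> by (apply dec_false; auto). rewrite IH.
    assert (dec (p (fun n => B n /\ C n)) = false) as ->.
    { apply dec_false. intro H. apply HC. eapply (uf_mono p Hp); [|exact H]. intros n [a b]; auto. }
    reflexivity.
Qed.

Lemma filt_lt C (l : list U) : (exists p, In p l /\ ~ p C) -> length (filt C l) < length l.
Proof. induction l as [|a l IH]; intros [p [Hin Hp]]. destruct Hin.
  unfold filt; simpl. destruct Hin as [E|Hin].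
  - subst a. assert (chi p C = false) as -> by (unfold chi; apply dec_false; auto).
    simpl. apply Nat.lt_succ_r, filter_length_le.
  - destruct (chi a C); simpl. specialize (IH (ex_intro _ p (conj Hin Hp))). unfold filt in IH. lia.
    apply Nat.lt_succ_r, filter_length_le.
Qed.

Lemma sumchi_T l : Forall uf l -> sumchi l (fun _ => True) = Nat.odd (length l).
Proof. induction 1 as [|p l Hp Hl IH]; simpl; auto. rewrite IH.
  assert (chi p (fun _ => True) = true) as -> by (apply dec_true; apply (uf_T p Hp)).
  rewrite Nat.odd_succ, <- Nat.negb_odd. reflexivity. Qed.

Lemma Lmain M : forall (P : nat -> Prop) (F : nat -> list U), inf P ->
  (forall k, P k -> NoDup (F k) /\ Forall uf (F k) /\ F k <> [] /\ length (F k) <= M) ->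
  exists A, inf (fun k => P k /\ sumchi (F k) A = true).
Proof. induction M as [|M IH]; intros P F HP HF.
  - exfalso. destruct (HP 0) as [k [_ Pk]]. destruct (HF k Pk) as [_ [_ [Hne HL]]].
    destruct (F k); simpl in HL; [congruence|lia].
  - destruct (classic (exists C, inf (fun k => P k /\ filt C (F k) <> [] /\
                                        exists p, In p (F k) /\ ~ p C))) as [[C HC]|HnC].
    + destruct (IH (fun k => P k /\ filt C (F k) <> [] /\ exists p, In p (F k) /\ ~ p C)
                   (fun k => filt C (F k)) HC) as [B HB].
      * intros k [Pk [Hne Hex]]. destruct (HF k Pk) as [H1 [H2 [H3 H4]]].
        repeat split; auto. apply NoDup_filter; auto.
        apply Forall_forall. intros x Hx. apply filter_In in Hx.
        rewrite Forall_forall in H2. apply H2; tauto.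
        pose proof (filt_lt C (F k) Hex). cbv beta. lia.
      * exists (fun n => B n /\ C n). intros N. destruct (HB N) as [k [Hk [[Pk _] Hs]]].
        exists k. split; auto. split; auto. rewrite <- sumchi_filt; auto. apply (HF k Pk).
    + destruct (classic (inf (fun k => P k /\ sumchi (F k) (fun _ => True) = true))) as [HT|HT].
      { exists (fun _ => True); auto. }
      exfalso.
      assert (exists N0, forall k, N0 <= k -> P k -> sumchi (F k) (fun _ => True) = false) as [N0 HN0].
      { apply NNPP; intro Hn. apply HT. intros N. apply NNPP; intro Hn'. apply Hn. exists N.
        intros k Hk Pk. destruct (sumchi (F k) (fun _ => True)) eqn:E; auto. exfalso; apply Hn'; eauto. }
      set (P' := fun k => P k /\ N0 <= k).
      set (p := fun k => hd (fun _ => True) (F k)).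
      set (q := fun k => hd (fun _ => True) (tl (F k))).
      assert (Hshape : forall k, P' k -> exists a b l, F k = a :: b :: l).
      { intros k [Pk Hk]. specialize (HN0 k Hk Pk). destruct (HF k Pk) as [_ [H2 [H3 _]]].
        rewrite sumchi_T in HN0; auto. destruct (F k) as [|a [|b l]]; try congruence.
        simpl in HN0; discriminate. eauto. }
      apply (core2 P' p q).
      * intros N. destruct (HP (Nat.max N N0)) as [k [Hk Pk]]. exists k. split. lia. split; auto; lia.
      * intros k Hk. destruct (Hshape k Hk) as [a [b [l E]]]. destruct Hk as [Pk _].
        destruct (HF k Pk) as [H1 [H2 _]]. unfold p, q. rewrite E in *. simpl.
        rewrite Forall_forall in H2. split; [|split]. apply H2; simpl; auto. apply H2; simpl; auto.
        intro Eab. subst. apply NoDup_cons_iff in H1. destruct H1 as [H1 _]. apply H1. left; auto.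
      * intros C. assert (Hn : exists N, forall k, N <= k -> P k ->
              ~ (filt C (F k) <> [] /\ exists p, In p (F k) /\ ~ p C)).
        { apply NNPP; intro Hn. apply HnC. exists C. intros N. apply NNPP; intro Hn'.
          apply Hn. exists N. intros k Hk Pk Hc. apply Hn'. exists k; auto. }
        destruct Hn as [N HN]. exists N. intros k Hk [Pk HkN0].
        destruct (Hshape k (conj Pk HkN0)) as [a [b [l E]]].
        specialize (HN k Hk Pk). unfold p, q. rewrite E in *. simpl.
        assert (Hfa : forall x, In x (a :: b :: l) -> x C -> filt C (a :: b :: l) <> []).
        { intros x Hx HxC Hf. assert (In x (filt C (a :: b :: l))).
          { apply filter_In. split; auto. apply dec_true; auto. }
          rewrite Hf in H; destruct H. }
        split; intro H1; apply NNPP; intro H2; apply HN; split.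
        -- apply (Hfa a); simpl; auto.
        -- exists b; simpl; auto.
        -- apply (Hfa b); simpl; auto.
        -- exists a; simpl; auto.
Qed.

Require Import Defs.
From Stdlib Require Import Arith Lia List Bool Classical ClassicalEpsilon
  FunctionalExtensionality PropExtensionality ProofIrrelevance.
Import ListNotations.

Lemma normalize (l : list U) : Forall uf l -> exists l', NoDup l' /\ Forall uf l' /\
  length l' <= length l /\ forall A, sumchi l' A = sumchi l A.
Proof. induction 1 as [|p l Hp Hl IH].
  - exists []. repeat split; auto. constructor.
  - destruct IH as [l' [N' [F' [L' E']]]].
    destruct (classic (In p l')) as [Hin|Hin].
    + destruct (in_split _ _ Hin) as [l1 [l2 ->]].
      exists (l1 ++ l2). repeat split.
      * eapply NoDup_remove_1; eauto.
      * rewrite Forall_forall in *. intros x Hx. apply F'. apply in_app_or in Hx. apply in_or_app.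
        destruct Hx; auto. right; right; auto.
      * rewrite length_app in *. simpl in *. lia.
      * intros A. simpl. rewrite <- E'. rewrite !sumchi_app. simpl.
        destruct (sumchi l1 A), (chi p A), (sumchi l2 A); reflexivity.
    + exists (p :: l'). split; [constructor; auto|split; [constructor; auto|split; [simpl; lia|]]].
      intros A; simpl; rewrite E'; auto.
Qed.

Lemma sep_list p (l0 : list U) : uf p -> Forall uf l0 -> ~ In p l0 ->
  exists D, p D /\ forall t, In t l0 -> ~ t D.
Proof. intros Hp. induction 1 as [|t l0 Ht Hl IH]; intros Hn.
  - exists (fun _ => True). split. apply (uf_T p Hp). intros t [].
  - destruct IH as [D [pD HD]]. intro; apply Hn; right; auto.
    destruct (uf_sep p t Hp Ht) as [X [pX tX]]. intro; apply Hn; left; auto.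
    exists (fun n => X n /\ D n). split. apply (uf_and p Hp); auto.
    intros t' [E|Ht'] Hc.
    + subst t'. apply tX. eapply (uf_mono t Ht); [|exact Hc]. intros n [a b]; auto.
    + apply (HD t' Ht'). rewrite Forall_forall in Hl.
      eapply (uf_mono t' (Hl t' Ht')); [|exact Hc]. intros n [a b]; auto.
Qed.

Lemma nonzero (l : list U) : NoDup l -> Forall uf l -> l <> [] -> exists A, sumchi l A = true.
Proof. intros HN HF Hne. destruct l as [|p l0]. congruence.
  apply NoDup_cons_iff in HN. destruct HN as [Hn HN]. inversion HF; subst.
  destruct (sep_list p l0 H1 H2 Hn) as [D [pD HD]]. exists D. simpl.
  assert (sumchi l0 D = false).
  { clear -HD. induction l0 as [|t l0 IH]; simpl; auto. rewrite IH.
    assert (chi t D = false) as -> by (unfold chi; apply dec_false; apply HD; left; auto). auto.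
    intros t' Ht'; apply HD; right; auto. }
  rewrite H. assert (chi p D = true) as -> by (unfold chi; apply dec_true; auto). reflexivity.
Qed.

Lemma avoid_list (l : list Gt) : op0 (fun g => forall h, In h l -> g <> h).
Proof. intros g Hg.
  destruct (list_choice (fun h (A : S) => gv g A <> gv h A) l) as [B [_ HB]].
  { intros h Hh. specialize (Hg h Hh). apply NNPP; intro Hn. apply Hg. apply Gt_eq'.
    intros A. apply NNPP; intro; apply Hn; eauto. }
  exists B. intros g' Hg' h Hh E. subst. destruct (HB h Hh) as [A [HA HA']].
  apply HA'. symmetry. apply Hg'; auto.
Qed.

Lemma conv_eventually_K s x : converges op s x -> exists m N, forall n, N <= n -> K m (s n).
Proof. intros Hc. apply NNPP; intro Hn.
  assert (H : forall m, exists n, m <= n /\ ~ K m (s n)).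
  { intros m. apply NNPP; intro H'. apply Hn. exists m, m. intros n Hnm.
    apply NNPP; intro; apply H'; eauto. }
  set (phi := fun m => proj1_sig (constructive_indefinite_description _ (H m))).
  assert (Hphi : forall m, m <= phi m /\ ~ K m (s (phi m))).
  { intros m. unfold phi. apply (proj2_sig (constructive_indefinite_description _ (H m))). }
  set (Z := fun g => g <> x /\ exists m, g = s (phi m)).
  assert (HZ : op (fun g => ~ Z g)).
  { intros j.
    exists (fun g => forall h, In h (filter (fun h => dec (h <> x)) (map (fun m => s (phi m)) (seq 0 j))) -> g <> h).
    split. apply avoid_list.
    intros g Hg. split.
    - intros HnZ h Hh E. subst. apply filter_In in Hh. destruct Hh as [Hh Hx].
      apply in_map_iff in Hh. destruct Hh as [m [Em _]]. apply HnZ. split.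
      apply dec_true; auto. exists m; auto.
    - intros HV [Hgx [m Em]]. destruct (Nat.lt_ge_cases m j) as [Hlt|Hge].
      + apply (HV g); auto. apply filter_In. split. apply in_map_iff. exists m. split; auto.
        apply in_seq. lia. apply dec_true. auto.
      + apply (proj2 (Hphi m)). rewrite <- Em. apply K_mono with j; auto. }
  destruct (Hc _ HZ) as [N HN]. { intros [Hxx _]; auto. }
  destruct (K_all x) as [m0 Hm0].
  set (m := Nat.max N m0).
  destruct (Hphi m) as [H1 H2]. apply (HN (phi m)). lia. split.
  - intro E. apply H2. rewrite E. apply K_mono with m0; auto. lia.
  - exists m; auto.
Qed.

Lemma conv_coord s x A : converges op s x -> exists N, forall n, N <= n -> gv (s n) A = gv x A.
Proof. intros Hc. apply (Hc (fun g => gv g A = gv x A)); auto. apply op0_op. intros g Hg. exists [A]. intros g' H'.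
  rewrite <- Hg. apply H'; left; auto. Qed.

Lemma conv_hits s x : converges op s x -> forall m, exists n, m <= n /\ s n = x.
Proof. intros Hc m0. apply NNPP; intro Hn.
  assert (Hne : forall n, m0 <= n -> s n <> x) by (intros n Hn' E; apply Hn; eauto).
  destruct (conv_eventually_K s x Hc) as [m [N HN]].
  destruct (K_all x) as [m1 Hm1].
  set (P := fun n => Nat.max m0 N <= n).
  assert (Hrep : forall n, exists l, P n -> NoDup l /\ Forall uf l /\ l <> [] /\ length l <= m + m1 /\
                    forall A, sumchi l A = gv (mul (s n) x) A).
  { intros n. destruct (classic (P n)) as [Pn|Pn]; [|exists []; tauto].
    destruct (K_mul _ _ _ _ (HN n ltac:(unfold P in Pn; lia)) Hm1) as [l [Fl [Ll El]]].
    destruct (normalize l Fl) as [l' [N' [F' [L' E']]]].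
    exists l'. intros _. repeat split; auto.
    - intro E. subst. apply (Hne n). unfold P in Pn; lia. apply Gt_eq'. intros A.
      assert (H := f_equal (fun f => f A) El). simpl in H. rewrite <- E' in H. simpl in H.
      destruct (gv (s n) A), (gv x A); simpl in *; congruence.
    - lia.
    - intros A. rewrite E', El. reflexivity. }
  set (F := fun n => proj1_sig (constructive_indefinite_description _ (Hrep n))).
  assert (HF : forall n, P n -> NoDup (F n) /\ Forall uf (F n) /\ F n <> [] /\ length (F n) <= m + m1 /\
                    forall A, sumchi (F n) A = gv (mul (s n) x) A).
  { intros n. unfold F. apply (proj2_sig (constructive_indefinite_description _ (Hrep n))). }
  destruct (Lmain (m + m1) P F) as [A HA].
  - intros N'. exists (Nat.max N' (Nat.max m0 N)). split. lia. unfold P; lia.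
  - intros k Pk. destruct (HF k Pk) as [? [? [? [? _]]]]; auto.
  - destruct (conv_coord s x A Hc) as [N2 HN2].
    destruct (HA N2) as [k [Hk [Pk Hs]]].
    destruct (HF k Pk) as [_ [_ [_ [_ HE]]]]. rewrite HE, gv_mul, (HN2 k Hk) in Hs.
    rewrite xorb_nilpotent in Hs. discriminate.
Qed.

Lemma cs_star : countable_cs_star_character op.
Proof. intros x. exists (fun _ => fun g => g = x). intros s O Hc HO Ox.
  exists (fun g => g = x). split. exists 0; auto. split; auto. split.
  intros y ->; auto. intros m. destruct (conv_hits s x Hc m) as [n [Hn E]]. eauto.
Qed.

Lemma inf_cell (B : list S) : forall Z : nat -> Prop, inf Z ->
  exists Z', inf Z' /\ (forall k, Z' k -> Z k) /\ forall A, In A B -> forall a b, Z' a -> Z' b -> (A a <-> A b).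
Proof. induction B as [|A B IH]; intros Z HZ.
  - exists Z. split; [auto|split; [auto|intros A0 Hin; destruct Hin]].
  - destruct (IH Z HZ) as [Z1 [H1 [H2 H3]]].
    destruct (classic (inf (fun k => Z1 k /\ A k))) as [HA|HA].
    + exists (fun k => Z1 k /\ A k). split; [exact HA|split].
      * intros k [a _]; auto.
      * intros A' [E|HA'] a b [a1 a2] [b1 b2]. subst A'; tauto. apply H3; auto.
    + assert (exists N, forall k, N <= k -> Z1 k -> ~ A k) as [N HN].
      { apply NNPP; intro Hn. apply HA. intros N. apply NNPP; intro Hn'. apply Hn. exists N.
        intros k Hk Zk Ak. apply Hn'. exists k; auto. }
      exists (fun k => Z1 k /\ N <= k). split; [|split].
      * intros M. destruct (H1 (Nat.max M N)) as [k [Hk Zk]]. exists k. repeat split; auto; lia.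
      * intros k [a _]; auto.
      * intros A' [E|HA'] a b [a1 a2] [b1 b2]. subst A'. split; intro; exfalso.
        apply (HN a); auto. apply (HN b); auto. apply H3; auto.
Qed.

Lemma same_cell (B : list S) : exists a b, a <> b /\ forall A, In A B -> (A a <-> A b).
Proof. destruct (inf_cell B (fun _ => True)) as [Z [HZ [_ H]]].
  intros N; exists N; auto.
  destruct (HZ 0) as [a [_ Za]]. destruct (HZ (Datatypes.S a)) as [b [Hb Zb]].
  exists a, b. split. lia. intros A HA. apply H; auto.
Qed.

Lemma not_seq : ~ sequential op.
Proof. intros Hs.
  assert (Hcl : is_closed op (fun g => g <> zero)).
  { apply Hs. intros s x Hsx Hc. destruct (conv_hits s x Hc 0) as [n [_ E]]. subst. auto. }
  destruct (Hcl 2) as [V [HV EV]].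
  assert (Vz : V zero) by (apply EV; [apply K_zero|tauto]).
  destruct (HV zero Vz) as [B HB].
  destruct (same_cell B) as [a [b [Hab Hcell]]].
  assert (Hf : Forall uf [(fun A : S => A a); (fun A : S => A b)]).
  { apply Forall_cons; [apply uf_principal|apply Forall_cons; [apply uf_principal|apply Forall_nil]]. }
  set (g := mkG _ Hf).
  assert (Kg : K 2 g) by (exists [(fun A : S => A a); (fun A : S => A b)]; simpl; auto).
  assert (Vg : V g).
  { apply HB. intros A HA. rewrite gv_zero. unfold g. rewrite gv_mkG. simpl. unfold chi.
    rewrite (dec_ext (A b) (A a)) by (symmetry; apply Hcell; auto).
    destruct (dec (A a)); reflexivity. }
  apply (proj2 (EV g Kg)) in Vg. apply Vg. intro E.
  assert (H := f_equal (fun h => gv h (fun n => n = a)) E). simpl in H.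
  unfold chi in H.
  rewrite (proj2 (dec_true (a = a))) in H by auto.
  rewrite (proj2 (dec_false (b = a))) in H by auto. discriminate.
Qed.

Theorem mainTheorem11 :
  exists (G : Type) (op : (G -> Prop) -> Prop)
         (mul : G -> G -> G) (inv : G -> G) (e : G),
    topological_group op mul inv e /\
    k_space op /\
    countable_cs_star_character op /\
    ~ sequential op.
Proof.
  exists Gt, op, mul, inv, zero. split; [apply topgroup|]. split; [apply kspace|].
  split; [apply cs_star|apply not_seq].
Qed.
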